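(* Let $(X,T)$ be a minimal topological dynamical system. Then $(X,T)$ is mean equicontinuous if and only if it is equicontinuous in the mean.
   Context: A t.d.s. $(X,T)$ consists of a compact metric space $(X,d)$ and a continuous map $T\colon X\to X$; it is minimal if every orbit $\{x,Tx,T^2x,\dots\}$ is dense in $X$. Let $\bar d_n(x,y)=\frac1n\sum_{i=0}^{n-1}d(T^ix,T^iy)$. $(X,T)$ is mean equicontinuous if for every $\varepsilon>0$ there is $\delta>0$ such that $d(x,y)<\delta$ implies $\limsup_{n\to\infty}\bar d_n(x,y)<\varepsilon$. $(X,T)$ is equicontinuous in the mean if for every $\varepsilon>0$ there is $\delta>0$ such that $d(x,y)<\delta$ implies $\bar d_n(x,y)<\varepsilon$ for every $n\in\mathbb{N}$. *)

(* Defs.v *)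
From Stdlib Require Import Reals Lra.
Open Scope R_scope.

Record is_metric {X : Type} (d : X -> X -> R) : Prop := {
  metric_nonneg : forall x y, 0 <= d x y;
  metric_eq0 : forall x y, d x y = 0 <-> x = y;
  metric_sym : forall x y, d x y = d y x;
  metric_tri : forall x y z, d x z <= d x y + d y z
}.

Definition open_set {X : Type} (d : X -> X -> R) (U : X -> Prop) : Prop :=
  forall x, U x -> exists r, 0 < r /\ forall y, d x y < r -> U y.

Definition compact_metric {X : Type} (d : X -> X -> R) : Prop :=
  forall (I : Type) (U : I -> X -> Prop),
    (forall i, open_set d (U i)) ->
    (forall x, exists i, U i x) ->
    exists l : list I, forall x, exists i, List.In i l /\ U i x.

Definition continuous_map {X : Type} (d : X -> X -> R) (T : X -> X) : Prop :=
  forall x eps, 0 < eps -> exists delta, 0 < delta /\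
    forall y, d x y < delta -> d (T x) (T y) < eps.

Definition minimal {X : Type} (d : X -> X -> R) (T : X -> X) : Prop :=
  forall x y eps, 0 < eps -> exists n : nat, d y (Nat.iter n T x) < eps.

Fixpoint sum_orbit {X : Type} (d : X -> X -> R) (T : X -> X) (n : nat) (x y : X) : R :=
  match n with
  | O => 0
  | S k => sum_orbit d T k x y + d (Nat.iter k T x) (Nat.iter k T y)
  end.

Definition dbar {X : Type} (d : X -> X -> R) (T : X -> X) (n : nat) (x y : X) : R :=
  sum_orbit d T n x y / INR n.

(* limsup_{n->oo} u n < eps, written out: some c < eps bounds u eventually. *)
Definition limsup_lt (u : nat -> R) (eps : R) : Prop :=
  exists c, c < eps /\ exists N : nat, forall n, (N <= n)%nat -> u n <= c.

Definition mean_equicontinuous {X : Type} (d : X -> X -> R) (T : X -> X) : Prop :=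
  forall eps, 0 < eps -> exists delta, 0 < delta /\
    forall x y, d x y < delta -> limsup_lt (fun n => dbar d T n x y) eps.

Definition equicontinuous_in_mean {X : Type} (d : X -> X -> R) (T : X -> X) : Prop :=
  forall eps, 0 < eps -> exists delta, 0 < delta /\
    forall x y, d x y < delta -> forall n : nat, (1 <= n)%nat -> dbar d T n x y < eps.

(* Main.v *)
Require Import Defs.
From Stdlib Require Import Reals.
From Stdlib Require Import Lra Lia Classical ClassicalEpsilon.
Open Scope R_scope.

Lemma arch (A : R) : exists n : nat, A < INR n.
Proof. destruct (INR_archimed 1 A) as [n Hn]; [lra|]. exists n; lra. Qed.

Lemma choice_nat {A : Type} (P : nat -> A -> Prop) :
  (forall k, exists a, P k a) -> exists f : nat -> A, forall k, P k (f k).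
Proof.
  intro H. exists (fun k => proj1_sig (constructive_indefinite_description _ (H k))).
  intro k. exact (proj2_sig (constructive_indefinite_description _ (H k))).
Qed.

Fixpoint lmax {I} (f : I -> nat) (l : list I) : nat :=
  match l with nil => 0%nat | cons i l' => Nat.max (f i) (lmax f l') end.

Lemma lmax_In {I} (f : I -> nat) l i : List.In i l -> (f i <= lmax f l)%nat.
Proof.
  induction l as [|a l IH]; simpl; [tauto|].
  intros [H|H]; [subst; lia | specialize (IH H); lia].
Qed.

Lemma div_lt (s c a : R) : 0 < a -> s < c * a -> s / a < c.
Proof.
  intros Ha H. apply (Rmult_lt_reg_r a); auto. unfold Rdiv.
  rewrite Rmult_assoc, Rinv_l; lra.
Qed.

Lemma div_lt_inv (s c a : R) : 0 < a -> s / a < c -> s < c * a.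
Proof.
  intros Ha H. replace s with (s / a * a) by (field; lra).
  apply Rmult_lt_compat_r; auto.
Qed.

Lemma div_le_inv (s c a : R) : 0 < a -> s / a <= c -> s <= c * a.
Proof.
  intros Ha H. replace s with (s / a * a) by (field; lra).
  apply Rmult_le_compat_r; lra.
Qed.

Lemma inv_small (r : R) (k0 k : nat) : 0 < r -> / r < INR k0 -> (k0 <= k)%nat ->
  / (INR k + 1) < r.
Proof.
  intros Hr H Hk. apply le_INR in Hk.
  rewrite <- (Rinv_inv r). apply Rinv_lt_contravar.
  - apply Rmult_lt_0_compat; [apply Rinv_0_lt_compat; auto|].
    pose proof (pos_INR k); lra.
  - lra.
Qed.

Lemma d_refl {X} (d : X -> X -> R) (Hm : is_metric d) x : d x x = 0.
Proof. exact (proj2 (metric_eq0 d Hm x x) eq_refl). Qed.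

Lemma cluster {X} (d : X -> X -> R) (Hm : is_metric d) (Hc : compact_metric d)
  (s : nat -> X) :
  exists p, forall r, 0 < r -> forall K, exists k, (K <= k)%nat /\ d (s k) p < r.
Proof.
  apply NNPP; intro Hn.
  assert (H : forall p, exists r K, 0 < r /\ forall k, (K <= k)%nat -> r <= d (s k) p).
  { intro p. apply NNPP; intro H1. apply Hn. exists p. intros r Hr K.
    apply NNPP; intro H2. apply H1. exists r, K. split; [exact Hr|].
    intros k Hk. apply Rnot_lt_le. intro H3. apply H2. exists k. auto. }
  set (I := {p : X & {r : R & {K : nat | 0 < r /\ forall k, (K <= k)%nat -> r <= d (s k) p}}}).
  destruct (Hc I (fun i y => d (projT1 i) y < projT1 (projT2 i))) as [l Hl].
  - intros [p [r [K [Hr HK]]]] x Hx; simpl in *.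
    exists (r - d p x). split; [lra|]. intros y Hy.
    pose proof (metric_tri d Hm p x y). lra.
  - intro x. destruct (H x) as [r [K [Hr HK]]].
    exists (existT _ x (existT _ r (exist _ K (conj Hr HK)))). simpl.
    rewrite d_refl; auto.
  - set (Kmax := lmax (fun i : I => proj1_sig (projT2 (projT2 i))) l).
    destruct (Hl (s Kmax)) as [i [Hin Hlt]].
    pose proof (lmax_In (fun i : I => proj1_sig (projT2 (projT2 i))) l _ Hin) as Hle.
    pose proof (proj2 (proj2_sig (projT2 (projT2 i))) Kmax Hle) as HK.
    rewrite (metric_sym d Hm) in HK. lra.
Qed.

Lemma cluster2 {X} (d : X -> X -> R) (Hm : is_metric d) (Hc : compact_metric d)
  (u v : nat -> X) :
  exists p q, forall r, 0 < r -> forall K, exists k, (K <= k)%nat /\ d (u k) p < r /\ d (v k) q < r.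
Proof.
  destruct (cluster d Hm Hc u) as [p Hp].
  assert (H : forall k, exists m, (k <= m)%nat /\ d (u m) p < / (INR k + 1)).
  { intro k. apply Hp. apply Rinv_0_lt_compat. pose proof (pos_INR k). lra. }
  destruct (choice_nat _ H) as [phi Hphi].
  destruct (cluster d Hm Hc (fun k => v (phi k))) as [q Hq].
  exists p, q. intros r Hr K.
  destruct (arch (/ r)) as [k0 Hk0].
  destruct (Hq r Hr (Nat.max K k0)) as [k [Hk Hvk]].
  exists (phi k). destruct (Hphi k) as [Hk1 Hk2].
  split; [lia|]. split; [|exact Hvk].
  eapply Rlt_trans; [exact Hk2|]. apply (inv_small r k0 k); auto. lia.
Qed.


Lemma sum_nonneg {X} (d : X -> X -> R) (Hm : is_metric d) T n x y :
  0 <= sum_orbit d T n x y.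
Proof.
  induction n; cbn [sum_orbit]; [lra|].
  pose proof (metric_nonneg d Hm (Nat.iter n T x) (Nat.iter n T y)). lra.
Qed.

Lemma sum_sym {X} (d : X -> X -> R) (Hm : is_metric d) T n x y :
  sum_orbit d T n x y = sum_orbit d T n y x.
Proof.
  induction n; cbn [sum_orbit]; [lra|]. rewrite IHn, (metric_sym d Hm). lra.
Qed.

Lemma sum_tri {X} (d : X -> X -> R) (Hm : is_metric d) T n x y z :
  sum_orbit d T n x z <= sum_orbit d T n x y + sum_orbit d T n y z.
Proof.
  induction n; cbn [sum_orbit]; [lra|].
  pose proof (metric_tri d Hm (Nat.iter n T x) (Nat.iter n T y) (Nat.iter n T z)). lra.
Qed.

Lemma sum_add {X} (d : X -> X -> R) T a b x y :
  sum_orbit d T (a + b) x y =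
  sum_orbit d T a x y + sum_orbit d T b (Nat.iter a T x) (Nat.iter a T y).
Proof.
  induction b.
  - rewrite Nat.add_0_r. cbn [sum_orbit]. lra.
  - rewrite Nat.add_succ_r. cbn [sum_orbit]. rewrite IHb.
    rewrite <- !Nat.iter_add. rewrite (Nat.add_comm b a). lra.
Qed.

Lemma sum_le_bound {X} (d : X -> X -> R) T n x y e :
  (forall i, (i < n)%nat -> d (Nat.iter i T x) (Nat.iter i T y) <= e) ->
  sum_orbit d T n x y <= INR n * e.
Proof.
  induction n; intro H; cbn [sum_orbit]; [simpl; lra|].
  rewrite S_INR. pose proof (H n ltac:(lia)).
  assert (sum_orbit d T n x y <= INR n * e) by (apply IHn; intros; apply H; lia). lra.
Qed.

Lemma sum_lt_bound {X} (d : X -> X -> R) T n x y e :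
  (forall i, (i < n)%nat -> d (Nat.iter i T x) (Nat.iter i T y) < e) -> (1 <= n)%nat ->
  sum_orbit d T n x y < INR n * e.
Proof.
  destruct n as [|n]; intros H Hn; [lia|]. cbn [sum_orbit].
  rewrite S_INR. pose proof (H n ltac:(lia)).
  assert (sum_orbit d T n x y <= INR n * e)
    by (apply sum_le_bound; intros; left; apply H; lia). lra.
Qed.

Lemma INR_pos n : (1 <= n)%nat -> 0 < INR n.
Proof. intro H. apply lt_0_INR. lia. Qed.

Lemma dbar_small {X} (d : X -> X -> R) T n x y e :
  (forall i, (i < n)%nat -> d (Nat.iter i T x) (Nat.iter i T y) < e) -> (1 <= n)%nat ->
  dbar d T n x y < e.
Proof.
  intros H Hn. unfold dbar. apply div_lt; [apply INR_pos; auto|].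
  rewrite Rmult_comm. apply sum_lt_bound; auto.
Qed.

Lemma dbar_nonneg {X} (d : X -> X -> R) (Hm : is_metric d) T n x y :
  0 <= dbar d T n x y.
Proof.
  unfold dbar. destruct n as [|n].
  - simpl. unfold Rdiv. rewrite Rmult_0_l. lra.
  - unfold Rdiv. apply Rmult_le_pos; [apply sum_nonneg; auto|].
    left. apply Rinv_0_lt_compat. apply INR_pos. lia.
Qed.

Lemma dbar_sym {X} (d : X -> X -> R) (Hm : is_metric d) T n x y :
  dbar d T n x y = dbar d T n y x.
Proof. unfold dbar. rewrite sum_sym; auto. Qed.

Lemma dbar_tri {X} (d : X -> X -> R) (Hm : is_metric d) T n x y z :
  dbar d T n x z <= dbar d T n x y + dbar d T n y z.
Proof.
  unfold dbar. destruct n as [|n].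
  - simpl. unfold Rdiv. rewrite !Rmult_0_l. lra.
  - unfold Rdiv. rewrite <- Rmult_plus_distr_r. apply Rmult_le_compat_r.
    + left. apply Rinv_0_lt_compat. apply INR_pos. lia.
    + apply sum_tri; auto.
Qed.

Lemma LS_tri {X} (d : X -> X -> R) (Hm : is_metric d) T x y z a b :
  limsup_lt (fun n => dbar d T n x y) a -> limsup_lt (fun n => dbar d T n y z) b ->
  limsup_lt (fun n => dbar d T n x z) (a + b).
Proof.
  intros [c1 [Hc1 [N1 H1]]] [c2 [Hc2 [N2 H2]]].
  exists (c1 + c2). split; [lra|]. exists (Nat.max N1 N2). intros n Hn.
  pose proof (dbar_tri d Hm T n x y z). pose proof (H1 n ltac:(lia)).
  pose proof (H2 n ltac:(lia)). lra.
Qed.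

Lemma LS_shift {X} (d : X -> X -> R) (Hm : is_metric d) T x y a :
  limsup_lt (fun n => dbar d T n x y) a -> limsup_lt (fun n => dbar d T n (T x) (T y)) a.
Proof.
  intros [c [Hc [N H]]].
  assert (Hc0 : 0 <= c) by (pose proof (H N (le_n N)); pose proof (dbar_nonneg d Hm T N x y); lra).
  set (c' := (c + a) / 2).
  destruct (INR_archimed (c' - c) c) as [K HK]; [unfold c'; lra|].
  exists c'. split; [unfold c'; lra|]. exists (Nat.max (Nat.max N K) 1). intros n Hn.
  pose proof (H (S n) ltac:(lia)) as HS.
  unfold dbar in HS. apply div_le_inv in HS; [|apply INR_pos; lia].
  pose proof (sum_add d T 1 n x y) as Hadd. simpl Nat.iter in Hadd.
  replace (1 + n)%nat with (S n) in Hadd by lia.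
  pose proof (sum_nonneg d Hm T 1 x y).
  rewrite S_INR in HS.
  assert (HKn : INR K <= INR n) by (apply le_INR; lia).
  assert (INR K * (c' - c) <= INR n * (c' - c)) by (apply Rmult_le_compat_r; unfold c'; lra).
  unfold dbar. left. apply div_lt; [apply INR_pos; lia|].
  nra.
Qed.

Lemma LS_shift_iter {X} (d : X -> X -> R) (Hm : is_metric d) T x y a j :
  limsup_lt (fun n => dbar d T n x y) a ->
  limsup_lt (fun n => dbar d T n (Nat.iter j T x) (Nat.iter j T y)) a.
Proof.
  intro H. induction j; [exact H|]. simpl. apply LS_shift; auto.
Qed.

Lemma UC_T {X} (d : X -> X -> R) (Hm : is_metric d) (Hc : compact_metric d) T
  (Hcont : continuous_map d T) :
  forall e, 0 < e -> exists eta, 0 < eta /\ forall x y, d x y < eta -> d (T x) (T y) < e.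
Proof.
  intros e He. apply NNPP; intro Hn.
  assert (H : forall k : nat, exists xy : X * X,
    d (fst xy) (snd xy) < / (INR k + 1) /\ e <= d (T (fst xy)) (T (snd xy))).
  { intro k. apply NNPP; intro H1. apply Hn. exists (/ (INR k + 1)). split.
    - apply Rinv_0_lt_compat. pose proof (pos_INR k). lra.
    - intros x y Hxy. apply Rnot_le_lt. intro H2. apply H1. exists (x, y). simpl; auto. }
  destruct (choice_nat _ H) as [f Hf].
  destruct (cluster d Hm Hc (fun k => fst (f k))) as [p Hp].
  destruct (Hcont p (e / 2)) as [dl [Hdl Hcd]]; [lra|].
  destruct (arch (/ (dl / 2))) as [k0 Hk0].
  destruct (Hp (dl / 2) ltac:(lra) k0) as [k [Hk Hd]].
  destruct (Hf k) as [H1 H2].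
  pose proof (inv_small (dl / 2) k0 k ltac:(lra) Hk0 Hk).
  rewrite (metric_sym d Hm) in Hd.
  pose proof (metric_tri d Hm p (fst (f k)) (snd (f k))).
  pose proof (Hcd (fst (f k)) ltac:(lra)).
  pose proof (Hcd (snd (f k)) ltac:(lra)).
  pose proof (metric_tri d Hm (T (fst (f k))) (T p) (T (snd (f k)))).
  rewrite (metric_sym d Hm (T (fst (f k))) (T p)) in *. lra.
Qed.

Lemma UC_iter {X} (d : X -> X -> R) (Hm : is_metric d) (Hc : compact_metric d) T
  (Hcont : continuous_map d T) i :
  forall e, 0 < e -> exists eta, 0 < eta /\
    forall x y, d x y < eta -> d (Nat.iter i T x) (Nat.iter i T y) < e.
Proof.
  induction i; intros e He.
  - exists e. split; auto.
  - destruct (UC_T d Hm Hc T Hcont e He) as [e1 [He1 H1]].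
    destruct (IHi e1 He1) as [eta [Heta H2]].
    exists eta. split; auto. intros x y Hxy. simpl. apply H1, H2, Hxy.
Qed.

Lemma UC_fin {X} (d : X -> X -> R) (Hm : is_metric d) (Hc : compact_metric d) T
  (Hcont : continuous_map d T) N :
  forall e, 0 < e -> exists eta, 0 < eta /\
    forall x y, d x y < eta -> forall i, (i < N)%nat -> d (Nat.iter i T x) (Nat.iter i T y) < e.
Proof.
  induction N; intros e He.
  - exists 1. split; [lra|]. intros; lia.
  - destruct (IHN e He) as [e1 [He1 H1]].
    destruct (UC_iter d Hm Hc T Hcont N e He) as [e2 [He2 H2]].
    exists (Rmin e1 e2). split; [apply Rmin_pos; auto|].
    intros x y Hxy i Hi.
    destruct (Nat.eq_dec i N) as [->|Hne].
    + apply H2. eapply Rlt_le_trans; [exact Hxy|apply Rmin_r].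
    + apply H1; [eapply Rlt_le_trans; [exact Hxy|apply Rmin_l]|lia].
Qed.

Lemma bounded {X} (d : X -> X -> R) (Hm : is_metric d) (Hc : compact_metric d) :
  exists B, 0 <= B /\ forall a b, d a b <= B.
Proof.
  destruct (classic (inhabited X)) as [[x0]|Hn].
  - assert (HB : exists B, forall z, d x0 z <= B).
    { apply NNPP; intro Hn.
      assert (H : forall k : nat, exists z, INR k < d x0 z).
      { intro k. apply NNPP; intro H1. apply Hn. exists (INR k). intro z.
        apply Rnot_lt_le. intro H2. apply H1. exists z; auto. }
      destruct (choice_nat _ H) as [z Hz].
      destruct (cluster d Hm Hc z) as [p Hp].
      destruct (arch (d x0 p + 1)) as [K HK].
      destruct (Hp 1 ltac:(lra) K) as [k [Hk Hd]].
      pose proof (metric_tri d Hm x0 p (z k)).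
      rewrite (metric_sym d Hm (z k) p) in Hd.
      pose proof (le_INR _ _ Hk). pose proof (Hz k). lra. }
    destruct HB as [B HB]. exists (B + B). split.
    + pose proof (HB x0). rewrite d_refl in H; auto. lra.
    + intros a b. pose proof (metric_tri d Hm a x0 b). pose proof (HB a). pose proof (HB b).
      rewrite (metric_sym d Hm a x0) in *. lra.
  - exists 0. split; [lra|]. intros a. exfalso. apply Hn. exact (inhabits a).
Qed.

Lemma greedy {X} (d : X -> X -> R) (Hm : is_metric d) T (x y : X) (c B : R) (M : nat)
  (Hc0 : 0 <= c) (HB : forall a b, d a b <= B)
  (H : forall j, exists n, (1 <= n)%nat /\ (n <= M)%nat /\
        sum_orbit d T n (Nat.iter j T x) (Nat.iter j T y) <= c * INR n) :
  forall L j, sum_orbit d T L (Nat.iter j T x) (Nat.iter j T y) <= c * INR L + INR M * B.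
Proof.
  assert (HB0 : 0 <= B) by (pose proof (HB x x); rewrite d_refl in H0; auto).
  intro L. induction L as [L IH] using (well_founded_induction Wf_nat.lt_wf). intro j.
  destruct (H j) as [n [H1 [H2 H3]]].
  destruct (Compare_dec.le_lt_dec n L) as [HnL|HLn].
  - replace L with (n + (L - n))%nat at 1 by lia.
    rewrite sum_add. rewrite <- !Nat.iter_add.
    specialize (IH (L - n)%nat ltac:(lia) (n + j)%nat).
    rewrite minus_INR in IH by lia. nra.
  - assert (sum_orbit d T L (Nat.iter j T x) (Nat.iter j T y) <= INR L * B)
      by (apply sum_le_bound; intros; apply HB).
    assert (INR L <= INR M) by (apply le_INR; lia).
    pose proof (pos_INR L). nra.
Qed.

Theorem mainTheorem4 (X : Type) (d : X -> X -> R) (T : X -> X)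
  (Hmetric : is_metric d) (Hcompact : compact_metric d)
  (Hcont : continuous_map d T) (Hmin : minimal d T) :
  mean_equicontinuous d T <-> equicontinuous_in_mean d T.
Proof.
  split.
  2: { intros Hem eps Heps. destruct (Hem (eps / 2)) as [dl [Hdl H]]; [lra|].
       exists dl; split; auto. intros x y Hxy. exists (eps / 2). split; [lra|].
       exists 1%nat. intros n Hn. left. apply H; auto. }
  intros Hme eps Heps.
  set (e0 := eps / 10).
  assert (He0 : 0 < e0) by (unfold e0; lra).
  destruct (Hme e0 He0) as [d0 [Hd0 HME]].
  assert (HU : exists M, forall x y, d x y < d0 -> forall j, exists n,
    (1 <= n)%nat /\ (n <= M)%nat /\
    dbar d T n (Nat.iter j T x) (Nat.iter j T y) < 5 * e0).
  { apply NNPP; intro Hn.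
    assert (Hb : forall M, exists t : X * X * nat,
      d (fst (fst t)) (snd (fst t)) < d0 /\ forall n, (1 <= n)%nat -> (n <= M)%nat ->
      5 * e0 <= dbar d T n (Nat.iter (snd t) T (fst (fst t))) (Nat.iter (snd t) T (snd (fst t)))).
    { intro M. apply NNPP; intro H1. apply Hn. exists M. intros x y Hxy j.
      apply NNPP; intro H2. apply H1. exists (x, y, j). simpl. split; auto.
      intros n Hn1 Hn2. apply Rnot_lt_le. intro H3. apply H2. exists n. auto. }
    destruct (choice_nat _ Hb) as [f Hf].
    set (u := fun M => Nat.iter (snd (f M)) T (fst (fst (f M)))).
    set (v := fun M => Nat.iter (snd (f M)) T (snd (fst (f M)))).
    destruct (cluster2 d Hmetric Hcompact u v) as [p [q Hpq]].
    destruct (Hpq d0 Hd0 0%nat) as [M0 [_ [Hu0 Hv0]]].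
    assert (LSuv : limsup_lt (fun n => dbar d T n (u M0) (v M0)) e0).
    { apply LS_shift_iter; auto. apply HME. apply (Hf M0). }
    assert (LSpu : limsup_lt (fun n => dbar d T n p (u M0)) e0).
    { apply HME. rewrite (metric_sym d Hmetric). exact Hu0. }
    assert (LSvq : limsup_lt (fun n => dbar d T n (v M0) q) e0).
    { apply HME. exact Hv0. }
    pose proof (LS_tri d Hmetric T _ _ _ _ _ (LS_tri d Hmetric T _ _ _ _ _ LSpu LSuv) LSvq)
      as [c1 [Hc1 [N HN]]].
    set (n1 := Nat.max N 1).
    assert (Hn1 : dbar d T n1 p q <= c1) by (apply HN; unfold n1; lia).
    destruct (UC_fin d Hmetric Hcompact T Hcont n1 e0 He0) as [eta [Heta Hetaf]].
    destruct (Hpq eta Heta n1) as [M [HM [Hu Hv]]].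
    destruct (Hf M) as [_ Hbad]. specialize (Hbad n1 ltac:(unfold n1; lia) HM).
    change (5 * e0 <= dbar d T n1 (u M) (v M)) in Hbad.
    assert (A1 : dbar d T n1 (u M) p < e0).
    { apply dbar_small; [intros; apply Hetaf; auto | unfold n1; lia]. }
    assert (A2 : dbar d T n1 q (v M) < e0).
    { apply dbar_small; [intros; apply Hetaf; auto | unfold n1; lia].
      rewrite (metric_sym d Hmetric); auto. }
    pose proof (dbar_tri d Hmetric T n1 (u M) p (v M)).
    pose proof (dbar_tri d Hmetric T n1 p q (v M)). lra. }
  destruct HU as [M HU].
  destruct (bounded d Hmetric Hcompact) as [B [HB0 HB]].
  destruct (INR_archimed (eps / 2) (INR M * B)) as [N1 HN1]; [lra|].
  destruct (UC_fin d Hmetric Hcompact T Hcont N1 eps Heps) as [eta [Heta Hetaf]].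
  exists (Rmin d0 eta). split; [apply Rmin_pos; auto|].
  intros x y Hxy n Hn.
  assert (Hx0 : d x y < d0) by (eapply Rlt_le_trans; [exact Hxy|apply Rmin_l]).
  assert (Hx1 : d x y < eta) by (eapply Rlt_le_trans; [exact Hxy|apply Rmin_r]).
  destruct (Compare_dec.le_lt_dec N1 n) as [HNn|HnN].
  - assert (HG := greedy d Hmetric T x y (5 * e0) B M ltac:(lra) HB).
    assert (Hsum : sum_orbit d T n x y <= 5 * e0 * INR n + INR M * B).
    { refine (HG _ n 0%nat). intro j. destruct (HU x y Hx0 j) as [k [Hk1 [Hk2 Hk3]]].
      exists k. split; [auto|]. split; [auto|].
      unfold dbar in Hk3. left. apply div_lt_inv; auto. apply INR_pos; auto. }
    unfold dbar. apply div_lt; [apply INR_pos; auto|].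
    assert (INR N1 <= INR n) by (apply le_INR; auto).
    unfold e0 in Hsum. nra.
  - apply dbar_small; auto. intros i Hi. apply Hetaf; auto. lia.
Qed.
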